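(* Let $n$ be a nonnegative integer and let $q$, $a$, $z$ be indeterminates (equivalently, generic complex numbers such that no denominator below vanishes), with $a^{1/2}$ a fixed square root of $a$. Then the following two identities hold: \[ \frac{(q^{z+2};q^2)_n\,(a^{-1}q^{2-z};q^2)_n}{(q;q^2)_n\,(a^{-1}q^3;q^2)_n} =\sum_{k=0}^n \frac{(q^{-n};q)_k\,(-q^{-n};q)_k\,(q^{z+1};q)_k\,(a^{-1}q^{1-z};q)_k} {(q;q)_k\,(q^{-2n};q)_k\,(a^{-1/2}q^{3/2};q)_k\,(-a^{-1/2}q^{3/2};q)_k}\,q^k, \] and \[ \frac{(q^{z+2};q^2)_n\,(aq^{z-2n};q^2)_n}{(q^{z+1};q)_n\,(aq^{z-n};q)_n} =\sum_{k=0}^n \frac{(q^{-n};q)_k\,(q^{n+1};q)_k\,(a^{1/2}q^{-n-1/2};q)_k\,(-a^{1/2}q^{-n-1/2};q)_k} {(q;q)_k\,(-q;q)_k\,(q^{-z-n};q)_k\,(aq^{z-n};q)_k}\,q^k. \]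
   Context: For a variable $u$, a base $p$ and a nonnegative integer $n$, the shifted factorial is $(u;p)_0=1$ and $(u;p)_n=(1-u)(1-up)\cdots(1-up^{n-1})$; it is used here with bases $p=q$ and $p=q^2$. Powers such as $q^{z}$ and $q^{1/2}$ are understood formally (i.e., $q^{z}$ and $q^{1/2}$ are treated as variables). *)

(* Defs.v *)
From HB Require Import structures.
From mathcomp Require Import all_boot all_order all_algebra.
Set Implicit Arguments. Unset Strict Implicit. Unset Printing Implicit Defensive.
Import Order.TTheory GRing.Theory Num.Theory.
Local Open Scope ring_scope.

Definition qpoch {R : ringType} (u p : R) (n : nat) : R :=
  \prod_(i < n) (1 - u * p ^+ i).

(* Main.v *)
Require Import Defs.
From HB Require Import structures.
From mathcomp Require Import all_boot all_order all_algebra ring zify.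
Import Order.TTheory GRing.Theory Num.Theory.
Local Open Scope ring_scope.
Set Warnings "-notation-overridden -ambiguous-paths -deprecated".
Set Implicit Arguments. Unset Strict Implicit.

Section Basics.
Variable F : fieldType.
Implicit Types u p : F.

Lemma qpochS u p n : qpoch u p n.+1 = qpoch u p n * (1 - u * p ^+ n).
Proof. by rewrite /qpoch big_ord_recr. Qed.

Lemma qpochSl u p n : qpoch u p n.+1 = (1 - u) * qpoch (u * p) p n.
Proof.
rewrite /qpoch big_ord_recl /= expr0 mulr1; congr (_ * _).
by apply: eq_bigr => i _; rewrite exprS mulrA.
Qed.

Lemma qpoch0 u p : qpoch u p 0 = 1.
Proof. by rewrite /qpoch big_ord0. Qed.

Lemma qpoch_pref u p n k : (k <= n)%N -> qpoch u p n != 0 -> qpoch u p k != 0.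
Proof.
elim: n => [|n IH]; first by rewrite leqn0 => /eqP ->.
rewrite leq_eqVlt => /orP [/eqP -> //|]; rewrite ltnS => kn.
rewrite qpochS mulf_eq0 negb_or => /andP [h _]; exact: IH.
Qed.

Lemma qpoch_fac u p n i : (i < n)%N -> qpoch u p n != 0 -> 1 - u * p ^+ i != 0.
Proof.
move=> lin /(@qpoch_pref u p n i.+1 lin); rewrite qpochS mulf_eq0 negb_or => /andP [_ ->] //.
Qed.

End Basics.

Lemma qpoch_neq0I (F : fieldType) (u p : F) n :
  (forall i, (i < n)%N -> 1 - u * p ^+ i != 0) -> qpoch u p n != 0.
Proof. by move=> h; apply/prodf_neq0 => i _; apply: h. Qed.



Section Core.
Variable F : fieldType.
Variables (q A Z : F).
Hypothesis q0 : q != 0.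
Hypothesis Z0 : Z != 0.

Definition P k := qpoch (Z*q) q k * qpoch (A*q*Z^-1) q k.
Definition L m := qpoch (Z*q^+2) (q^+2) m * qpoch (A*q^+2*Z^-1) (q^+2) m.
Definition E k j := q ^+ 'C(k.+1,2) * qpoch (q^+(2*k+3) * A) (q^+2) j
   * qpoch (q^+k.+1) q (2 * j) / qpoch (q^+2) (q^+2) j.
Definition aa m k := (1 - q * (q^+m)^+2 / q^+k) * (1 - q^+3 * (q^+m)^+2 * q^+k * A).
Definition bb m k := q * (q^+m)^+2 / q^+k.

Lemma LS m : L m.+1 = L m * ((1 - Z*q^+2*(q^+m)^+2)*(1 - A*q^+2*Z^-1*(q^+m)^+2)).
Proof. rewrite /L !qpochS -!exprM mulnC !exprM; ring. Qed.

Lemma fP m k : (1 - Z*q^+2*(q^+m)^+2)*(1 - A*q^+2*Z^-1*(q^+m)^+2) * P k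
  = aa m k * P k + bb m k * P k.+1.
Proof.
have qk : q^+k != 0 by rewrite expf_neq0.
rewrite /P /aa /bb !qpochS; field.
by rewrite qk Z0.
Qed.


Lemma pw a k : q ^+ (a * k) = (q ^+ k) ^+ a.
Proof. by rewrite mulnC exprM. Qed.

Lemma Estep i j : 1 - q^+2 * (q^+2)^+j != 0 -> qpoch (q^+2) (q^+2) j != 0 ->
  E i.+1 j.+1 = E i.+1 j * aa (i.+1 + j) i.+1 + E i j.+1 * bb (i.+1 + j) i.
Proof.
move=> h1 h2.
have qi : q^+i != 0 by rewrite expf_neq0.
rewrite /E /aa /bb.
rewrite [in LHS](@qpochS _ (q^+2)) [in LHS](@qpochS _ (q^+(2*i.+1+3) * A)).
rewrite [in X in _ = _ + X](@qpochS _ (q^+2)) [in X in _ = _ + X]qpochSl.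
have -> : (2 * j.+1 = (2 * j).+2)%N by lia.
rewrite ![in LHS](@qpochS _ (q ^+ i.+2)).
rewrite [in X in _ = _ + X](@qpochSl _ (q ^+ i.+1)) [in X in _ = _ + X](@qpochS _ (q ^+ i.+1 * q)).
have -> : q ^+ (2 * i + 3) * A * q ^+ 2 = q^+(2 * i.+1 + 3) * A.
  by rewrite -mulrA (mulrC A) mulrA -exprD; congr (_ ^+ _ * _); lia.
have -> : q ^+ i.+1 * q = q ^+ i.+2 by rewrite -exprSr.
rewrite (binS i.+1 1) bin1 exprD.
set X1 := qpoch (q ^+ (2 * i.+1 + 3) * A) (q ^+ 2) j.
set Y := qpoch (q ^+ i.+2) q (2 * j).
set G := qpoch (q ^+ 2) (q ^+ 2) j.
set B := q ^+ 'C(i.+1, 2).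
have e1 : forall a b c : nat, q ^+ (a * b + c) = (q^+b)^+a * q^+c.
  by move=> a b c; rewrite exprD pw.
rewrite !e1 (exprS q (2 * j)) !pw !(exprAC q 2 j) !exprD !(exprS q i.+1) !(exprS q i).
rewrite (exprAC q 2 j) in h1.
field.
by rewrite qi q0 exprMn h1 /G h2.
Qed.


Lemma E0step m : qpoch (q^+2) (q^+2) m.+1 != 0 -> E 0 m.+1 = E 0 m * aa m 0.
Proof.
move=> h; have h2 := h; rewrite qpochS mulf_eq0 negb_or in h2.
case/andP: h2 => hG h1.
rewrite /E /aa (@qpochS _ (q^+(2*0+3)*A)) (@qpochS _ (q^+2)).
have -> : (2 * m.+1 = (2 * m).+2)%N by lia.
rewrite !(@qpochS _ (q^+1)).
rewrite !pw (exprS q (2 * m)) pw !(exprAC q 2 m).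
rewrite (exprAC q 2 m) in h1.
field. by rewrite oner_neq0 hG exprMn h1.
Qed.

Lemma Elast m : E m.+1 0 = E m 0 * bb m m.
Proof.
have qm : q^+m != 0 by rewrite expf_neq0.
rewrite /E /bb !qpoch0 (binS m.+1 1) bin1 exprD exprS.
field. by rewrite qm oner_neq0.
Qed.

Lemma core n : qpoch (q^+2) (q^+2) n != 0 -> forall m, (m <= n)%N ->
  L m = \sum_(k < m.+1) E k (m - k) * P k.
Proof.
move=> H; elim=> [|m IH] mn.
  by rewrite big_ord1 /L /E /P !qpoch0 bin_small // expr0 !mulr1 invr1 mulr1.
rewrite LS IH ?(ltnW mn) // mulr_suml.
have hf : forall c k, c * P k * ((1 - Z*q^+2*(q^+m)^+2)*(1 - A*q^+2*Z^-1*(q^+m)^+2))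
   = c * aa m k * P k + c * bb m k * P k.+1.
  by move=> c k; rewrite -mulrA (mulrC (P k)) fP mulrDr !mulrA.
under eq_bigr do rewrite hf.
rewrite big_split /=.
rewrite big_ord_recl [in RHS]big_ord_recl /= big_ord_recr [in RHS]big_ord_recr /=.
rewrite subn0 subnn.
rewrite (@E0step m); last exact: (qpoch_pref mn H).
rewrite /bump /= subnn Elast -!addrA; congr (_ + _); rewrite !addrA; congr (_ + _).
rewrite -big_split /=; apply: eq_bigr => i _; rewrite !add1n.
have := ltn_ord i; move: (nat_of_ord i) => k lk.
rewrite -mulrDl; congr (_ * _).
rewrite subSS.
have e2 : (m - k = (m - k.+1).+1)%N by rewrite subnSK.
have jn : (m - k.+1 < n)%N by lia.
have e1 : m = (k.+1 + (m - k.+1))%N by lia.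
rewrite e2; move: (m - k.+1)%N e1 jn => j -> jn.
rewrite Estep //.
  exact: (qpoch_fac jn H).
by apply: (qpoch_pref _ H); lia.
Qed.

Lemma Erel k j : qpoch (q^+2) (q^+2) j.+1 != 0 ->
  E k j.+1 * (q^+k.+1 * (1 - q^+2 * (q^+j)^+2))
  = E k.+1 j * ((1 - q^+(2*k+3) * A) * (1 - q^+k.+1) * (1 - q^+k.+2 * (q^+j)^+2)).
Proof.
move=> h; have h2 := h; rewrite qpochS mulf_eq0 negb_or in h2.
case/andP: h2 => hG h1.
have qi : q^+k != 0 by rewrite expf_neq0.
rewrite /E (@qpochS _ (q^+2)) (@qpochSl _ (q^+(2*k+3) * A)).
have -> : (2 * j.+1 = (2 * j).+2)%N by lia.
rewrite (@qpochSl _ (q ^+ k.+1)) (@qpochS _ (q ^+ k.+1 * q)).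
have -> : q ^+ (2 * k + 3) * A * q ^+ 2 = q^+(2 * k.+1 + 3) * A.
  by rewrite -mulrA (mulrC A) mulrA -exprD; congr (_ ^+ _ * _); lia.
have -> : q ^+ k.+1 * q = q ^+ k.+2 by rewrite -exprSr.
rewrite (binS k.+1 1) bin1 (exprD q 'C(k.+1,2)).
set X1 := qpoch (q ^+ (2 * k.+1 + 3) * A) (q ^+ 2) j.
set Y := qpoch (q ^+ k.+2) q (2 * j).
set G := qpoch (q ^+ 2) (q ^+ 2) j.
set B := q ^+ 'C(k.+1, 2).
have e1 : forall a b c : nat, q ^+ (a * b + c) = (q^+b)^+a * q^+c.
  by move=> a b c; rewrite exprD pw.
rewrite !e1 !pw !(exprAC q 2 j) !(exprS q k.+1) !(exprS q k).
rewrite (exprAC q 2 j) in h1.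
field.
by rewrite exprMn h1 /G hG.
Qed.

Lemma qq2 n : qpoch q (q^+2) n * qpoch (q^+2) (q^+2) n = qpoch q q (2 * n).
Proof.
elim: n => [|n IH]; first by rewrite muln0 !qpoch0 mulr1.
have -> : (2 * n.+1 = (2 * n).+2)%N by lia.
rewrite !qpochS -IH !pw (exprS q (2 * n)) pw !(exprAC q 2 n); ring.
Qed.

End Core.



Section Id1.
Variable F : fieldType.
Variables (Q s Z : F) (n : nat).
Hypotheses (Q0 : Q != 0) (s0 : s != 0) (Z0 : Z != 0).
Local Notation q := (Q ^+ 2).
Local Notation a := (s ^+ 2).
Hypothesis h1 : qpoch q (q ^+ 2) n != 0.
Hypothesis h2 : qpoch (a^-1 * q ^+ 3) (q ^+ 2) n != 0.
Hypothesis h3 : qpoch q q n != 0.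
Hypothesis h4 : qpoch (q ^- (2 * n)) q n != 0.
Hypothesis h5 : qpoch (s^-1 * Q ^+ 3) q n != 0.
Hypothesis h6 : qpoch (- (s^-1 * Q ^+ 3)) q n != 0.

Lemma q0 : q != 0. Proof. by rewrite expf_neq0. Qed.

Lemma hq2 : qpoch (q^+2) (q^+2) n != 0.
Proof.
apply: qpoch_neq0I => i lin.
have e : q^+2 * (q^+2)^+i = q^+(2 * i + 2).
  by move: (q) => x; rewrite -exprM -exprD addnC.
rewrite e.
case: (leqP (2 * i + 2) n) => hi.
  have := qpoch_fac (i:=(2 * i + 1)%N) _ h3; rewrite -exprS.
  have -> : ((2 * i + 1).+1 = 2 * i + 2)%N by lia.
  by apply; lia.
set l := (2 * n - (2 * i + 2))%N.
have ln : (l < n)%N by rewrite /l; lia.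
have := qpoch_fac ln h4.
have el : (2 * n = l + (2 * i + 2))%N by rewrite /l; lia.
rewrite el exprD; apply: contra => /eqP h.
have -> : q ^+ (2 * i + 2) = 1 by apply/eqP; rewrite -subr_eq0 -opprB h oppr0.
by rewrite mulr1 mulVf ?subrr // expf_neq0 // q0.
Qed.


Definition cc k := qpoch (q ^- n) q k * qpoch (- q ^- n) q k * q ^+ k /
  (qpoch q q k * qpoch (q ^- (2 * n)) q k * qpoch (s^-1 * Q ^+ 3) q k
   * qpoch (- (s^-1 * Q ^+ 3)) q k).

Lemma ccS k : (k < n)%N ->
  cc k.+1 * ((1 - q^+(2*k+3) * a^-1) * (1 - q^+k.+1) * (1 - q^+k.+2 * (q^+(n - k.+1))^+2))
  = cc k * (q^+k.+1 * (1 - q^+2 * (q^+(n-k.+1))^+2)).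
Proof.
move=> kn.
have d1 := qpoch_pref (ltnW kn) h3.
have d2 := qpoch_pref (ltnW kn) h4.
have d5 := qpoch_pref (ltnW kn) h5.
have d6 := qpoch_pref (ltnW kn) h6.
have f1 := qpoch_fac kn h3.
have f2 := qpoch_fac kn h4.
have f5 := qpoch_fac kn h5.
have f6 := qpoch_fac kn h6.
rewrite /cc !qpochS.
move: (qpoch q q k) d1 => D1 d1.
move: (qpoch (q ^- (2 * n)) q k) d2 => D2 d2.
move: (qpoch (s^-1 * Q ^+ 3) q k) d5 => D5 d5.
move: (qpoch (- (s^-1 * Q ^+ 3)) q k) d6 => D6 d6.
move: (qpoch (q ^- n) q k) => N1.
move: (qpoch (- q ^- n) q k) => N2.
have en : n = (k.+1 + (n - k.+1))%N by rewrite subnKC.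
move: (n - k.+1)%N en => j en.
rewrite en in f2 *.
have e1 : forall x : F, forall m1 b c : nat, x ^+ (m1 * b + c) = (x^+b)^+m1 * x^+c.
  by move=> x m1 b c; rewrite exprD mulnC exprM.
have e2 : forall x : F, forall b : nat, x ^+ (2 * b) = (x^+b)^+2.
  by move=> x b; rewrite mulnC exprM.
rewrite (e2 q (k.+1 + j)) (exprD q k.+1 j) (e1 q 2 k 3) !(exprS q k.+1) !(exprS q k) in f2 *.
have qk : q ^+ k != 0 by rewrite expf_neq0 // q0.
have qj : q ^+ j != 0 by rewrite expf_neq0 // q0.
have e : 1 - ((q * q^+k * q^+j) ^+ 2)^-1 * q^+k
   = (q^+2 * q^+k * (q^+j)^+2 - 1) * (q^+2 * q^+k * (q^+j)^+2)^-1.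
  by field; rewrite ?qk ?qj ?q0 ?Q0 ?oner_neq0.
rewrite e mulf_eq0 negb_or in f2; case/andP: f2 => f2 _.
have g5 : s - Q^+3 * q^+k != 0.
  have -> : s - Q^+3 * q^+k = s * (1 - s^-1 * Q ^+ 3 * q ^+ k) by field.
  by rewrite mulf_neq0.
have g6 : s - - Q^+3 * q^+k != 0.
  have -> : s - - Q^+3 * q^+k = s * (1 - - (s^-1 * Q ^+ 3) * q ^+ k) by field.
  by rewrite mulf_neq0.
field.
by rewrite d1 d2 d5 d6 s0 qj qk Q0 g5 g6 f2 f1.
Qed.

Let C := qpoch q (q ^+ 2) n * qpoch (a^-1 * q ^+ 3) (q ^+ 2) n.

Lemma ccE k : (k <= n)%N -> cc k * C = E q a^-1 k (n - k).
Proof.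
elim: k => [|k IH] kn.
  rewrite /cc /C /E !qpoch0 subn0.
  have -> : 'C(1,2) = 0%N by [].
  have -> : q ^+ (2 * 0 + 3) / a = a^-1 * q^+3 by rewrite mulrC.
  rewrite expr0 expr1 !mulr1 invr1 mulr1 mul1r.
  rewrite -(qq2 q0 Z0 n).
  have := hq2; move: (qpoch (q ^+ 2) (q ^+ 2) n) => G hG.
  by field.
have kn' : (k < n)%N := kn.
have jn : (n - k.+1 < n)%N by rewrite ltn_subrL /= (leq_trans (ltn0Sn k) kn).
have e2 : (n - k = (n - k.+1).+1)%N by rewrite subnSK.
have hG : qpoch (q^+2) (q^+2) (n - k.+1).+1 != 0.
  by apply: (qpoch_pref _ hq2); rewrite -e2 leq_subr.
have er := @Erel F q a^-1 Z q0 Z0 k (n - k.+1) hG.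
have cs := ccS kn'.
rewrite e2 in IH.
have IH' := IH (ltnW kn).
have nz1 : 1 - q^+(2*k+3) * a^-1 != 0.
  have := qpoch_fac kn' h2.
  have ex : forall x y : F, x^+(2*k+3) * y = y * x^+3 * (x^+2)^+k.
    by move=> x y; rewrite exprD exprM; ring.
  by rewrite ex.
have nz2 : 1 - q^+k.+1 != 0 by have := qpoch_fac kn' h3; rewrite -exprS.
have nz3 : 1 - q ^+ k.+2 * (q ^+ (n - k.+1)) ^+ 2 != 0.
  have f2 := qpoch_fac kn' h4.
  have en : n = (k.+1 + (n - k.+1))%N by rewrite subnKC.
  move: (n - k.+1)%N en => j en.
  rewrite en in f2.
  have qk : q ^+ k != 0 by rewrite expf_neq0 // q0.
  have qj : q ^+ j != 0 by rewrite expf_neq0 // q0.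
  have e : 1 - q ^- (2 * (k.+1 + j)) * q ^+ k
     = - (1 - q ^+ k.+2 * (q ^+ j) ^+ 2) * (q ^+ k.+2 * (q ^+ j) ^+ 2)^-1.
    rewrite mulnC exprM (exprD q k.+1 j) !(exprS q k.+1) !(exprS q k).
    by field; rewrite ?qk ?qj ?q0 ?Q0 ?oner_neq0.
  rewrite e mulf_eq0 negb_or oppr_eq0 in f2; by case/andP: f2.
set den := (1 - q ^+ (2 * k + 3) * a^-1) * (1 - q ^+ k.+1) * (1 - q ^+ k.+2 * q ^+ (n - k.+1) ^+ 2).
set num := q ^+ k.+1 * (1 - q ^+ 2 * q ^+ (n - k.+1) ^+ 2).
have dn : den != 0 by rewrite /den !mulf_neq0.
apply: (mulIf dn).
rewrite mulrAC cs -er -IH'.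
by rewrite mulrAC.
Qed.

Lemma id1 :
   qpoch (Z * q ^+ 2) (q ^+ 2) n * qpoch (a^-1 * q ^+ 2 * Z^-1) (q ^+ 2) n
     / (qpoch q (q ^+ 2) n * qpoch (a^-1 * q ^+ 3) (q ^+ 2) n)
   = \sum_(0 <= k < n.+1)
       qpoch (q ^- n) q k * qpoch (- q ^- n) q k * qpoch (Z * q) q k
         * qpoch (a^-1 * q * Z^-1) q k
       / (qpoch q q k * qpoch (q ^- (2 * n)) q k * qpoch (s^-1 * Q ^+ 3) q k
          * qpoch (- (s^-1 * Q ^+ 3)) q k)
       * q ^+ k.
Proof.
have C0 : C != 0 by rewrite /C mulf_neq0.
rewrite big_mkord.
rewrite (eq_bigr (fun k : 'I_n.+1 => E q a^-1 k (n - k) * P q a^-1 Z k / C)); last first.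
  move=> k _.
  have kn : (k <= n)%N by rewrite -ltnS.
  rewrite -(ccE kn) /cc /P.
  field.
  by rewrite C0 /= !(qpoch_pref kn) .
rewrite -mulr_suml -(@core F q a^-1 Z q0 Z0 n hq2 n (leqnn n)) /L.
by [].
Qed.

End Id1.



Lemma qrev (F : fieldType) (c p : F) m : c != 0 -> p != 0 ->
  qpoch (c * p ^- m) p m = (- c) ^+ m * (p ^+ 'C(m.+1, 2))^-1 * qpoch (c^-1 * p) p m.
Proof.
move=> c0 p0; elim: m => [|m IH]; first by rewrite !qpoch0 expr0 bin_small // expr0 invr1 !mulr1.
rewrite qpochSl.
have -> : c * p ^- m.+1 * p = c * p ^- m.
  have pm : p ^+ m != 0 by rewrite expf_neq0.
  by rewrite exprS; field; rewrite ?pm ?p0.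
rewrite IH qpochS (binS m.+1 1) bin1 exprD (exprS (- c)) (exprS p m).
have pm : p ^+ m != 0 by rewrite expf_neq0.
have pB : p ^+ 'C(m.+1, 2) != 0 by rewrite expf_neq0.
move: (p ^+ 'C(m.+1, 2)) pB => B pB.
by field; rewrite c0 pm p0 pB.
Qed.

Section Id2.
Variable F : fieldType.
Variables (Q s Z : F) (n : nat).
Hypotheses (Q0 : Q != 0) (s0 : s != 0) (Z0 : Z != 0).
Local Notation q := (Q ^+ 2).
Local Notation a := (s ^+ 2).
Hypothesis k1 : qpoch (Z * q) q n != 0.
Hypothesis k2 : qpoch (a * Z * q ^- n) q n != 0.
Hypothesis k3 : qpoch q q n != 0.
Hypothesis k4 : qpoch (- q) q n != 0.
Hypothesis k5 : qpoch (Z^-1 * q ^- n) q n != 0.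

Lemma q0' : q != 0. Proof. by rewrite expf_neq0. Qed.

Lemma hq2' : qpoch (q^+2) (q^+2) n != 0.
Proof.
apply: qpoch_neq0I => i lin.
have := qpoch_fac lin k3; have := qpoch_fac lin k4.
have -> : 1 - q ^+ 2 * (q ^+ 2) ^+ i = (1 - q * q^+i) * (1 - - q * q^+i).
  by move: (Q ^+ 2) => x; rewrite -exprM mulnC exprM; ring.
by move=> a1 a2; rewrite mulf_neq0.
Qed.

Definition T2 m := qpoch (q ^- n) q m * qpoch (q ^+ n.+1) q m
  * qpoch (s * Q ^- (2 * n + 1)) q m * qpoch (- (s * Q ^- (2 * n + 1))) q m
  / (qpoch q q m * qpoch (- q) q m * qpoch (Z^-1 * q ^- n) q m
     * qpoch (a * Z * q ^- n) q m) * q ^+ m.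

Lemma T2S i : (i < n)%N ->
  T2 i.+1 * (q ^+ (n - i) * (1 - q^+2 * (q^+i)^+2) * (1 - Z * q * q^+(n - i.+1))
              * (1 - a^-1 * q * Z^-1 * q^+(n - i.+1)))
  = T2 i * ((1 - q^+(2 * (n - i.+1) + 3) * a^-1) * (1 - q^+(n - i)) * (1 - q^+(n - i).+1 * (q^+i)^+2)).
Proof.
move=> lin.
have d3 := qpoch_pref (ltnW lin) k3.
have d4 := qpoch_pref (ltnW lin) k4.
have d5 := qpoch_pref (ltnW lin) k5.
have d2 := qpoch_pref (ltnW lin) k2.
have f3 := qpoch_fac lin k3.
have f4 := qpoch_fac lin k4.
have f5 := qpoch_fac lin k5.
have f2 := qpoch_fac lin k2.
rewrite /T2 !qpochS.
move: (qpoch q q i) d3 => D3 d3.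
move: (qpoch (- q) q i) d4 => D4 d4.
move: (qpoch (Z^-1 * q ^- n) q i) d5 => D5 d5.
move: (qpoch (a * Z * q ^- n) q i) d2 => D2 d2.
move: (qpoch (q ^- n) q i) => N1.
move: (qpoch (q ^+ n.+1) q i) => N2.
move: (qpoch (s * Q ^- (2 * n + 1)) q i) => N3.
move: (qpoch (- (s * Q ^- (2 * n + 1))) q i) => N4.
have e2 : (n - i = (n - i.+1).+1)%N by rewrite subnSK.
have en : n = ((n - i.+1).+1 + i)%N by rewrite -e2 subnK // ltnW.
rewrite e2.
move: (n - i.+1)%N en => k en.
rewrite en in f2 f5 *.
have e1 : forall x : F, forall m1 b c : nat, x ^+ (m1 * b + c) = (x^+b)^+m1 * x^+c.
  by move=> x m1 b c; rewrite exprD mulnC exprM.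
have e3 : forall x : F, forall b c : nat, x ^+ (2 * b + c) = (x^+2)^+b * x^+c.
  by move=> x b c; rewrite exprD exprM.
rewrite (e3 Q (k.+1 + i) 1%N) (e1 q 2%N k 3%N) (exprS q (k.+1 + i)) (exprD q k.+1 i) !(exprS q k.+1) !(exprS q k) (exprS q i) expr1 in f2 f5 *.
have qk : q ^+ k != 0 by rewrite expf_neq0 // q0'.
have qi : q ^+ i != 0 by rewrite expf_neq0 // q0'.
have g2 : q * q ^+ k - a * Z != 0.
  have -> : q * q ^+ k - a * Z = (q * q^+k) * (1 - a * Z / (q * q ^+ k * q ^+ i) * q ^+ i).
    by field; rewrite ?qk ?qi ?Q0 ?oner_neq0.
  by rewrite mulf_neq0 // mulf_neq0 // q0'.
have g5 : Z * (q * q ^+ k) - 1 != 0.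
  have -> : Z * (q * q ^+ k) - 1 = Z * (q * q^+k) * (1 - Z^-1 / (q * q ^+ k * q ^+ i) * q ^+ i).
    by field; rewrite ?qk ?qi ?Q0 ?Z0 ?oner_neq0.
  by rewrite !mulf_neq0 // q0'.
field.
by rewrite s0 d2 d5 d4 d3 Z0 qi qk Q0 g2 g5 f4 f3.
Qed.

Lemma base1 : (a * Z)^-1 * q = a^-1 * q * Z^-1.
Proof. by rewrite invfM; ring. Qed.

Lemma hPn2 : qpoch (a^-1 * q * Z^-1) q n != 0.
Proof.
have := k2; rewrite qrev; [|by rewrite mulf_neq0 // expf_neq0|exact: q0'].
by rewrite base1 !mulf_eq0 !negb_or => /andP [_ ->].
Qed.

Lemma hPn : P q a^-1 Z n != 0.
Proof. by rewrite /P mulf_neq0 // hPn2. Qed.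

Let K := (q ^+ 'C(n.+1, 2))^-1 / P q a^-1 Z n.

Lemma T2E i : (i <= n)%N -> T2 i = K * E q a^-1 (n - i) i * P q a^-1 Z (n - i).
Proof.
elim: i => [|i IH] lin.
  rewrite /T2 /K /E !qpoch0 subn0 expr0 !mulr1 !invr1 !mulr1.
  have := hPn; move: (P q a^-1 Z n) => Pn Pn0.
  have qC : q ^+ 'C(n.+1, 2) != 0 by rewrite expf_neq0 // q0'.
  by field; rewrite Pn0 qC.
have lin' : (i < n)%N := lin.
have ts := T2S lin'.
have IH' := IH (ltnW lin).
have e2 : (n - i = (n - i.+1).+1)%N by rewrite subnSK.
rewrite e2 in ts IH'.
have hG : qpoch (q^+2) (q^+2) i.+1 != 0 by apply: (qpoch_pref lin hq2').
have er := @Erel F q a^-1 Z q0' Z0 (n - i.+1) i hG.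
have kn : (n - i.+1 < n)%N by rewrite ltn_subrL /= (leq_trans (ltn0Sn i) lin).
have x1 : q ^+ (n - i.+1).+1 != 0 by rewrite expf_neq0 // q0'.
have x2 : 1 - q ^+ 2 * (q ^+ i) ^+ 2 != 0.
  have := qpoch_fac lin' hq2'.
  have ex : forall x : F, x^+2 * (x^+2)^+i = x^+2 * (x^+i)^+2.
    by move=> x; rewrite -exprM mulnC exprM.
  by rewrite ex.
have x3 := qpoch_fac kn k1.
have x4 := qpoch_fac kn hPn2.
set X := q ^+ (n - i.+1).+1 * (1 - q ^+ 2 * q ^+ i ^+ 2) * (1 - Z * q * q ^+ (n - i.+1)) *
         (1 - a^-1 * q * Z^-1 * q ^+ (n - i.+1)).
have X0 : X != 0 by rewrite /X !mulf_neq0.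
apply: (mulIf X0).
rewrite ts IH' /P qpochS qpochS /X.
move: er.
move: (E q a^-1 (n - i.+1).+1 i) (E q a^-1 (n - i.+1) i.+1) => E1 E0 er.
move: (qpoch (Z * q) q (n - i.+1)) (qpoch (a^-1 * q * Z^-1) q (n - i.+1)) => P1 P2.
set den := (1 - q ^+ (2 * (n - i.+1) + 3) * a^-1) * (1 - q ^+ (n - i.+1).+1) *
  (1 - q ^+ (n - i.+1).+2 * q ^+ i ^+ 2).
set num := q ^+ (n - i.+1).+1 * (1 - q ^+ 2 * q ^+ i ^+ 2).
set f1 := 1 - Z * q * q ^+ (n - i.+1).
set f2 := 1 - a^-1 * q * Z^-1 * q ^+ (n - i.+1).
transitivity (K * P1 * f1 * P2 * f2 * (E1 * den)); first by ring.
by rewrite -er /num; ring.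
Qed.

Lemma id2 :
   qpoch (Z * q ^+ 2) (q ^+ 2) n * qpoch (a * Z * q ^- (2 * n)) (q ^+ 2) n
     / (qpoch (Z * q) q n * qpoch (a * Z * q ^- n) q n)
   = \sum_(0 <= k < n.+1)
       qpoch (q ^- n) q k * qpoch (q ^+ n.+1) q k
         * qpoch (s * Q ^- (2 * n + 1)) q k * qpoch (- (s * Q ^- (2 * n + 1))) q k
       / (qpoch q q k * qpoch (- q) q k * qpoch (Z^-1 * q ^- n) q k
          * qpoch (a * Z * q ^- n) q k)
       * q ^+ k.
Proof.
rewrite big_nat_rev /= big_mkord.
rewrite (eq_bigr (fun i : 'I_n.+1 => K * (E q a^-1 i (n - i) * P q a^-1 Z i))); last first.
  move=> i _; have iin : (i <= n)%N by rewrite -ltnS.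
  transitivity (T2 (n - i)); first by rewrite add0n subSS.
  rewrite (T2E (leq_subr i n)).
  by rewrite (subKn iin); exact: (esym (mulrA _ _ _)).
rewrite -mulr_sumr -(@core F q a^-1 Z q0' Z0 n hq2' n (leqnn n)) /K /L /P.
have aZ : a * Z != 0 by rewrite mulf_neq0 // expf_neq0.
rewrite (exprM (Q ^+ 2) 2 n) !qrev //; try by rewrite ?expf_neq0.
have -> : (a * Z)^-1 * q^+2 = a^-1 * q^+2 * Z^-1 by rewrite invfM; ring.
rewrite base1 (exprAC q 2 'C(n.+1, 2)).
have qC : q ^+ 'C(n.+1, 2) != 0 by rewrite expf_neq0 // q0'.
have := hPn2; have := k1; have ca : (- (a * Z)) ^+ n != 0 by rewrite expf_neq0 // oppr_eq0.
move: (q ^+ 'C(n.+1, 2)) qC => B qC.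
move: (qpoch (Z * q) q n) (qpoch (a^-1 * q * Z^-1) q n) => P1 P2 p1 p2.
by field; rewrite ?B ?p1 ?p2 ?ca ?qC.
Qed.

End Id2.


Theorem mainTheorem2 (R : numClosedFieldType) (n : nat) (Q s Z : R) :
  Q != 0 -> s != 0 -> Z != 0 ->
  let q := Q ^+ 2 in let a := s ^+ 2 in
  (qpoch q (q ^+ 2) n != 0 ->
   qpoch (a^-1 * q ^+ 3) (q ^+ 2) n != 0 ->
   qpoch q q n != 0 ->
   qpoch (q ^- (2 * n)) q n != 0 ->
   qpoch (s^-1 * Q ^+ 3) q n != 0 ->
   qpoch (- (s^-1 * Q ^+ 3)) q n != 0 ->
   qpoch (Z * q ^+ 2) (q ^+ 2) n * qpoch (a^-1 * q ^+ 2 * Z^-1) (q ^+ 2) n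
     / (qpoch q (q ^+ 2) n * qpoch (a^-1 * q ^+ 3) (q ^+ 2) n)
   = \sum_(0 <= k < n.+1)
       qpoch (q ^- n) q k * qpoch (- q ^- n) q k * qpoch (Z * q) q k
         * qpoch (a^-1 * q * Z^-1) q k
       / (qpoch q q k * qpoch (q ^- (2 * n)) q k * qpoch (s^-1 * Q ^+ 3) q k
          * qpoch (- (s^-1 * Q ^+ 3)) q k)
       * q ^+ k)
  /\
  (qpoch (Z * q) q n != 0 ->
   qpoch (a * Z * q ^- n) q n != 0 ->
   qpoch q q n != 0 ->
   qpoch (- q) q n != 0 ->
   qpoch (Z^-1 * q ^- n) q n != 0 ->
   qpoch (Z * q ^+ 2) (q ^+ 2) n * qpoch (a * Z * q ^- (2 * n)) (q ^+ 2) n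
     / (qpoch (Z * q) q n * qpoch (a * Z * q ^- n) q n)
   = \sum_(0 <= k < n.+1)
       qpoch (q ^- n) q k * qpoch (q ^+ n.+1) q k
         * qpoch (s * Q ^- (2 * n + 1)) q k * qpoch (- (s * Q ^- (2 * n + 1))) q k
       / (qpoch q q k * qpoch (- q) q k * qpoch (Z^-1 * q ^- n) q k
          * qpoch (a * Z * q ^- n) q k)
       * q ^+ k).
Proof.
move=> Q0 s0 Z0 q a; rewrite /q /a; split.
  by move=> h1 h2 h3 h4 h5 h6; apply: id1.
by move=> h1 h2 h3 h4 h5; apply: id2.
Qed.
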